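(* Let $0<\gamma\le\frac{1-\beta}{(1+\beta)^2\Phi_{\max}^2}$, let $z_0=\theta_0-\theta^\star$, and for $t\ge1$ let $C^{t:1}=(I-\gamma a_t)(I-\gamma a_{t-1})\cdots(I-\gamma a_1)$. Then for all $t\ge1$, $$\mathbb E\big[\|C^{t:1}z_0\|_2^2\big]\le(1-\gamma(1-\beta)\mu')^t\,\mathbb E\big[\|z_0\|_2^2\big]\le\exp(-\gamma(1-\beta)\mu't)\,\mathbb E\big[\|z_0\|_2^2\big].$$
   Context: Setting. Let $\mathcal S=\{1,\dots,n\}$ be a finite state space and $\mathcal A$ a finite action space; fix a stationary randomized policy $\pi$, transition probabilities $P(s'|s,a)$, a reward function $r$ with $|r(s,a)|\le R_{\max}$, and a discount factor $\beta\in(0,1)$. Let $P^\pi(s,s')=\sum_a\pi(s,a)P(s'|s,a)$, assumed irreducible with stationary distribution $\rho$, $D=\mathrm{diag}(\rho)$. Features $\phi:\mathcal S\to\mathbb R^d$ with $\|\phi(s)\|_2\le\Phi_{\max}$, $\Phi\in\mathbb R^{n\times d}$ with rows $\phi(s)^\top$ of full column rank, $R(s)=\sum_a\pi(s,a)r(s,a)$, $A=\Phi^\top D(I-\beta P^\pi)\Phi$, $b=\Phi^\top DR$, $\theta^\star=A^{-1}b$, $B=\sum_s\rho(s)\phi(s)\phi(s)^\top$ with minimum eigenvalue $\mu'>0$. Samples $(s_t,a_t,r_t,s'_t)_{t\ge1}$ i.i.d. with $s_t\sim\rho$, $a_t\sim\pi(s_t,\cdot)$, $r_t=r(s_t,a_t)$,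 $s'_t\sim P(\cdot|s_t,a_t)$, independent of the initial parameter $\theta_0$; $a_t=\phi(s_t)\phi(s_t)^\top-\beta\phi(s_t)\phi(s'_t)^\top$. *)

(* Defs.v *)
From HB Require Import structures.
From mathcomp Require Import all_boot all_order all_algebra.
From mathcomp Require Import all_classical all_reals all_analysis.
Set Implicit Arguments. Unset Strict Implicit. Unset Printing Implicit Defensive.
Import Order.TTheory GRing.Theory Num.Theory.
Local Open Scope ring_scope.

Section TDdefs.
Variables (R : realType) (n m d : nat).

Definition sample := ('I_n * 'I_m * 'I_n)%type.

Definition Ppi (pi : 'M[R]_(n, m)) (P : 'I_n -> 'I_m -> 'I_n -> R) : 'M[R]_n :=
  \matrix_(s, s') \sum_(a < m) pi s a * P s a s'.

Definition irreducible (M : 'M[R]_n) : Prop :=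
  forall s s' : 'I_n, exists k : nat, 0 < (M ^+ k) s s'.

Definition phi (Phi : 'M[R]_(n, d)) (s : 'I_n) : 'cV[R]_d := (row s Phi)^T.

Definition sqnorm (v : 'cV[R]_d) : R := \sum_(i < d) (v i 0) ^+ 2.

Definition Rvec (pi : 'M[R]_(n, m)) (r : 'I_n -> 'I_m -> R) : 'cV[R]_n :=
  \col_s \sum_(a < m) pi s a * r s a.

Definition Amat (beta : R) (pi : 'M[R]_(n, m)) P (rho : 'rV[R]_n)
  (Phi : 'M[R]_(n, d)) : 'M[R]_d :=
  Phi^T *m diag_mx rho *m (1%:M - beta *: Ppi pi P) *m Phi.

Definition bvec (pi : 'M[R]_(n, m)) r (rho : 'rV[R]_n) (Phi : 'M[R]_(n, d))
  : 'cV[R]_d := Phi^T *m diag_mx rho *m Rvec pi r.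

Definition thetastar beta pi P r rho Phi : 'cV[R]_d :=
  invmx (Amat beta pi P rho Phi) *m bvec pi r rho Phi.

Definition Bmat (rho : 'rV[R]_n) (Phi : 'M[R]_(n, d)) : 'M[R]_d :=
  \sum_(s < n) rho 0 s *: (phi Phi s *m (phi Phi s)^T).

Definition amat (beta : R) (Phi : 'M[R]_(n, d)) (x : sample) : 'M[R]_d :=
  let: (s, _, s') := x in
  phi Phi s *m (phi Phi s)^T - beta *: (phi Phi s *m (phi Phi s')^T).

(* C^{t:1} = (I - g a_t) ... (I - g a_1) for the sample list [:: x_1; ...; x_t] *)
Definition Cprod (beta gamma : R) (Phi : 'M[R]_(n, d)) (xs : seq sample)
  : 'M[R]_d :=
  foldl (fun M x => (1%:M - gamma *: amat beta Phi x) *m M) 1%:M xs.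

(* law of one sample: rho(s) pi(s,a) P(s'|s,a) *)
Definition qsample (pi : 'M[R]_(n, m)) P (rho : 'rV[R]_n) (x : sample) : R :=
  let: (s, a, s') := x in rho 0 s * pi s a * P s a s'.

(* E over the i.i.d. samples x_1..x_t of ||C^{t:1} z||^2, for fixed z *)
Definition ExpSamples (t : nat) beta gamma pi P rho Phi (z : 'cV[R]_d) : R :=
  \sum_(xs : t.-tuple sample)
     (\prod_(x <- xs) qsample pi P rho x) *
     sqnorm (Cprod beta gamma Phi xs *m z).

End TDdefs.

(* Main.v *)
Require Import Defs.
From HB Require Import structures.
From mathcomp Require Import all_boot all_order all_algebra.
From mathcomp Require Import all_classical all_reals all_analysis.
From mathcomp.algebra_tactics Require Import ring lra.
From mathcomp Require Import measurable_realfun.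
Import Order.TTheory GRing.Theory Num.Theory numFieldNormedType.Exports.
Local Open Scope ring_scope.

Section Spec.
Local Open Scope classical_set_scope.
Variable R : realType.
Local Set Implicit Arguments.

Definition rsq {d} (v : 'rV[R]_d) : R := \sum_(i < d) v 0 i ^+ 2.
Definition rqf {d} (B : 'M[R]_d) (v : 'rV[R]_d) : R := (v *m B *m v^T) 0 0.

Lemma rqfE d (B : 'M[R]_d) v :
  rqf B v = \sum_(j < d) \sum_(i < d) v 0 i * B i j * v 0 j.
Proof.
rewrite /rqf mxE; apply: eq_bigr => j _; rewrite !mxE big_distrl /=.
by apply: eq_bigr => i _.
Qed.

Lemma continuous_bigsum (T : topologicalType) (I : Type) (s : seq I)
  (f : I -> T -> R) : (forall i, continuous (f i)) ->
  continuous (fun x => \sum_(i <- s) f i x).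
Proof.
move=> cf; elim: s => [|i s IH].
  under eq_fun do rewrite big_nil; exact: cst_continuous.
under eq_fun do rewrite big_cons.
by move=> x; apply: continuousD; [exact: cf | exact: IH].
Qed.

Lemma coordc d i : continuous (fun v : 'rV[R]_d => v 0 i).
Proof. exact: coord_continuous. Qed.

Lemma rsq_cont d : continuous (@rsq d).
Proof.
apply: continuous_bigsum => i; under eq_fun do rewrite expr2; move=> x.
by apply: (@continuousM _ _ (fun v : 'rV[R]_d => v 0 i) (fun v : 'rV[R]_d => v 0 i)); apply: coordc.
Qed.

Lemma rqf_cont d (B : 'M[R]_d) : continuous (rqf B).
Proof.
have -> : rqf B = fun v => \sum_(j < d) \sum_(i < d) v 0 i * B i j * v 0 j.
  by apply: funext => v; rewrite rqfE.
apply: continuous_bigsum => j; apply: continuous_bigsum => i x.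
apply: (@continuousM _ _ (fun v : 'rV[R]_d => v 0 i * B i j) (fun v : 'rV[R]_d => v 0 j)); last exact: coordc.
apply: (@continuousM _ _ (fun v : 'rV[R]_d => v 0 i) (fun v : 'rV[R]_d => B i j)); first exact: coordc.
exact: cst_continuous.
Qed.


Lemma rsq_ge0 d (v : 'rV[R]_d) : 0 <= rsq v.
Proof. by apply: sumr_ge0 => i _; rewrite sqr_ge0. Qed.

Lemma rsqE d (v : 'rV[R]_d) : rsq v = (v *m v^T) 0 0.
Proof. by rewrite mxE; apply: eq_bigr => i _; rewrite mxE expr2. Qed.

Lemma rsq_eq0 d (v : 'rV[R]_d) : rsq v = 0 -> v = 0.
Proof.
move=> /eqP; rewrite psumr_eq0 => [/allP H|i _]; last by rewrite sqr_ge0.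
apply/rowP => i; rewrite mxE; apply/eqP; rewrite -sqrf_eq0.
by apply: (implyP (H i _)) => //; rewrite ?mem_index_enum ?mem_enum.
Qed.

Lemma rsq_coord d (v : 'rV[R]_d) i : v 0 i ^+ 2 <= rsq v.
Proof.
rewrite /rsq (bigD1 i) //= lerDl; apply: sumr_ge0 => j _; exact: sqr_ge0.
Qed.

Lemma rsqZ d (v : 'rV[R]_d) k : rsq (k *: v) = k ^+ 2 * rsq v.
Proof. by rewrite /rsq mulr_sumr; apply: eq_bigr => i _; rewrite mxE exprMn. Qed.

Lemma rqfZ d (B : 'M[R]_d) (v : 'rV[R]_d) k : rqf B (k *: v) = k ^+ 2 * rqf B v.
Proof.
by rewrite /rqf linearZ /= -scalemxAl -scalemxAl -scalemxAr !mxE mulrA expr2.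
Qed.

Lemma trmx11 (X : 'M[R]_1) : X^T 0 0 = X 0 0.
Proof. by rewrite mxE. Qed.

Lemma rqf_shift d (C : 'M[R]_d) (c w : 'rV[R]_d) e : C^T = C ->
  rqf C (c + e *: w) = rqf C c + 2 * e * (c *m C *m w^T) 0 0 + e ^+ 2 * rqf C w.
Proof.
move=> CT.
have sym : (w *m C *m c^T) 0 0 = (c *m C *m w^T) 0 0.
  by rewrite -trmx11 !trmx_mul trmxK CT mulmxA.
rewrite /rqf linearD /= linearZ /= !mulmxDl !mulmxDr -!scalemxAl -!scalemxAr.
move: sym; rewrite !mxE => ->; ring.
Qed.

Lemma rqf_ge d (B : 'M[R]_d) (mu : R) : B^T = B -> (0 < d)%N ->
  (forall lam, eigenvalue B lam -> mu <= lam) ->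
  forall v, mu * rsq v <= rqf B v.
Proof.
case: d B => [//|d'] B BT _ Hmu.
pose S := [set v : 'rV[R]_d'.+1 | rsq v = 1].
have S0 : S !=set0.
  exists (delta_mx 0 0); rewrite /S /= /rsq (bigD1 0) //= big1 ?mxE ?eqxx /=.
    by rewrite addr0 expr1n.
  by move=> i /negbTE Hi; rewrite mxE Hi andbF expr0n.
have cS : compact S.
  apply: bounded_closed_compact.
    exists 1; split; first by rewrite real1.
    move=> M M1 v Sv /=.
    rewrite /Num.norm /= mx_normrE; apply: bigmax_le; first by lra.
    move=> [i j] _ /=; rewrite (ord1 i).
    have := rsq_coord v j; rewrite -(real_normK (num_real (v 0 j))) [rsq v]Sv => h.
    have : 0 <= `|v 0 j| by [].
    move=> h0; nra.
  have -> : S = rsq @^-1` [set x | x = 1] by [].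
  by move: (@rsq_cont d'.+1) => /continuous_closedP; apply; apply: closed_eq.
have [c cS_ cmin] := compact_EVT_min S0 cS (@continuous_subspaceT _ _ S _ (rqf_cont B)).
move: cS_; rewrite inE /S /= => rc.
set lam := rqf B c.
have Hlam : forall u, lam * rsq u <= rqf B u.
  move=> u; have [/rsq_eq0 ->|] := eqVneq (rsq u) 0.
    by rewrite /rqf /rsq !mul0mx big1 ?mxE ?mulr0 // => i _; rewrite mxE expr0n.
  move=> s0; have sp : 0 < rsq u by rewrite lt_def s0 rsq_ge0.
  set k := (Num.sqrt (rsq u))^-1.
  have k2 : k ^+ 2 = (rsq u)^-1 by rewrite /k exprVn sqr_sqrtr // ltW.
  have := cmin (k *: u); rewrite inE /S /= rsqZ k2 mulVf // => /(_ erefl).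
  rewrite rqfZ k2 -/lam => h.
  by rewrite -ler_pdivlMr // mulrC.
pose C := B - lam%:M.
have CT : C^T = C by rewrite /C linearB /= BT tr_scalar_mx.
have gE : forall u, rqf C u = rqf B u - lam * rsq u.
  move=> u; rewrite /rqf /C mulmxBr mulmxBl mul_mx_scalar -scalemxAl mxE.
  by rewrite rsqE; congr (_ + _); rewrite !mxE.
have g0 : forall u, 0 <= rqf C u by move=> u; rewrite gE subr_ge0.
have gc : rqf C c = 0 by rewrite gE rc mulr1 subrr.
set w := c *m C.
have wE : (c *m C *m w^T) 0 0 = rsq w by rewrite rsqE.
have w0 : rsq w = 0.
  apply/eqP; rewrite eq_le rsq_ge0 andbT; apply/negP => /negP; rewrite -ltNge => Ap.
  set A := rsq w in Ap wE; set G := rqf C w.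
  have G0 : 0 <= G by apply: g0.
  have := g0 (c + (- (A / (G + 1))) *: w); rewrite rqf_shift // gc wE add0r.
  have G1 : 0 < G + 1 by lra.
  set e := - (A / (G + 1)).
  have eE : e * (G + 1) = - A by rewrite /e mulNr divfK // gt_eqF.
  have e2 : e ^+ 2 * G = - (e * A) - e ^+ 2.
    by rewrite -mulrN -eE; ring.
  have en : e < 0 by rewrite /e oppr_lt0 divr_gt0.
  have eA : e * A < 0 by rewrite nmulr_rlt0.
  rewrite e2 => h.
  have : 0 <= e ^+ 2 by rewrite sqr_ge0.
  lra.
have cB : c *m B = lam *: c.
  apply/eqP; rewrite -subr_eq0; apply/eqP; move/rsq_eq0: w0; rewrite /w /C.
  by rewrite mulmxBr mul_mx_scalar.
have cn0 : c != 0.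
  apply/eqP => c0; have h0 : rsq (0 : 'rV[R]_d'.+1) = 0.
    by rewrite /rsq big1 // => i _; rewrite mxE expr0n.
  by move: rc; rewrite c0 h0 => /eqP; rewrite eq_sym oner_eq0.
have : eigenvalue B lam by apply/eigenvalueP; exists c.
move/Hmu => mulam v; apply: le_trans (Hlam v).
by rewrite ler_wpM2r // rsq_ge0.
Qed.

End Spec.
Arguments rsq {R d}. Arguments rqf {R d}.

Section Main.
Variables (R : realType) (n m d : nat).
Local Set Implicit Arguments.

Lemma foldl_Cprod (beta gamma : R) (Phi : 'M[R]_(n, d)) (xs : seq (sample n m)) (M : 'M[R]_d) :
  foldl (fun M x => (1%:M - gamma *: amat beta Phi x) *m M) M xs =
  Cprod beta gamma Phi xs *m M.
Proof.
rewrite /Cprod; elim: xs M => [|x xs IH] M /=; first by rewrite mul1mx.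
by rewrite IH [in RHS]IH mulmx1 mulmxA.
Qed.

Lemma Cprod_cons beta gamma (Phi : 'M[R]_(n, d)) (x : sample n m) xs :
  Cprod beta gamma Phi (x :: xs) =
  Cprod beta gamma Phi xs *m (1%:M - gamma *: amat beta Phi x).
Proof. by rewrite {1}/Cprod /= foldl_Cprod mulmx1. Qed.

Lemma ExpSamples0 beta gamma (pi : 'M[R]_(n, m)) P rho (Phi : 'M[R]_(n, d)) z :
  ExpSamples 0 beta gamma pi P rho Phi z = sqnorm z.
Proof.
rewrite /ExpSamples (big_pred1 [tuple]) /=; last by move=> xs; apply/esym/eqP; rewrite [LHS]tuple0.
by rewrite big_nil mul1r /Cprod /= mul1mx.
Qed.

Lemma ExpSamplesS t beta gamma (pi : 'M[R]_(n, m)) P rho (Phi : 'M[R]_(n, d)) z :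
  ExpSamples t.+1 beta gamma pi P rho Phi z =
  \sum_(x : sample n m) qsample pi P rho x *
     ExpSamples t beta gamma pi P rho Phi ((1%:M - gamma *: amat beta Phi x) *m z).
Proof.
rewrite /ExpSamples (reindex (fun p : sample n m * t.-tuple (sample n m) => cons_tuple p.1 p.2)) /=.
  rewrite -(pair_bigA _ (fun (x : sample n m) (xs : t.-tuple (sample n m)) =>
    (\prod_(y <- cons_tuple x xs) qsample pi P rho y) *
    sqnorm (Cprod beta gamma Phi (cons_tuple x xs) *m z))) /=; apply: eq_bigr => x _; rewrite mulr_sumr.
  apply: eq_bigr => xs _; rewrite big_cons Cprod_cons mulmxA; ring.
exists (fun xs => (thead xs, behead_tuple xs)) => [[x xs] _|xs _] /=.
  by congr (_, _); apply: val_inj.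
by rewrite [RHS]tuple_eta.
Qed.


Lemma sum_sample (F : sample n m -> R) :
  \sum_(x : sample n m) F x = \sum_(s < n) \sum_(a < m) \sum_(s' < n) F (s, a, s').
Proof.
rewrite pair_bigA /= pair_bigA /=.
by apply: eq_bigr => [[[s a] s']] _.
Qed.

Variables (pi : 'M[R]_(n, m)) (P : 'I_n -> 'I_m -> 'I_n -> R) (rho : 'rV[R]_n).
Hypothesis Hpi1 : forall s, \sum_(a < m) pi s a = 1.
Hypothesis HP1 : forall s a, \sum_(s' < n) P s a s' = 1.
Hypothesis Hrho1 : \sum_(s < n) rho 0 s = 1.
Hypothesis Hstat : rho *m Ppi pi P = rho.

Lemma sumq_s (f : 'I_n -> R) :
  \sum_(x : sample n m) qsample pi P rho x * f x.1.1 = \sum_(s < n) rho 0 s * f s.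
Proof.
rewrite sum_sample; apply: eq_bigr => s _.
rewrite -[RHS]mulr1 -(Hpi1 s) !mulr_sumr; apply: eq_bigr => a _.
rewrite -[RHS]mulr1 -(HP1 s a) !mulr_sumr; apply: eq_bigr => s' _ /=; ring.
Qed.

Lemma sumq_s' (f : 'I_n -> R) :
  \sum_(x : sample n m) qsample pi P rho x * f x.2 = \sum_(s < n) rho 0 s * f s.
Proof.
rewrite sum_sample.
under eq_bigr do rewrite exchange_big /=.
rewrite exchange_big /=; apply: eq_bigr => s' _.
have := congr1 (fun M : 'rV[R]_n => M 0 s') Hstat; rewrite /= mxE => <-.
rewrite mulr_suml; apply: eq_bigr => s _; rewrite mxE mulr_sumr mulr_suml.
by apply: eq_bigr => a _; ring.
Qed.

Lemma sumq1 : \sum_(x : sample n m) qsample pi P rho x = 1.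
Proof.
have := sumq_s (fun _ => 1).
under [in RHS]eq_bigr do rewrite mulr1.
rewrite Hrho1 => <-; apply: eq_bigr => x _; by rewrite mulr1.
Qed.


Definition yv (Phi : 'M[R]_(n, d)) (z : 'cV[R]_d) (s : 'I_n) : R :=
  \sum_(i < d) Phi s i * z i 0.

Lemma step_entry beta gamma (Phi : 'M[R]_(n, d)) s a s' z i :
  ((1%:M - gamma *: amat beta Phi ((s, a, s') : sample n m)) *m z) i 0 =
  z i 0 - gamma * (yv Phi z s - beta * yv Phi z s') * Phi s i.
Proof.
rewrite mulmxBl mul1mx /amat -!scalemxAl !mulmxBl -!scalemxAl -!mulmxA.
rewrite !mxE !big_ord1 !mxE /yv /phi !trmxK.
under eq_bigr do rewrite mxE.
under [X in _ * (_ * X)]eq_bigr do rewrite mxE.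
ring.
Qed.


Lemma sum_sq_expand (f g : 'I_d -> R) k :
  \sum_(i < d) (f i - k * g i) ^+ 2 =
  \sum_(i < d) f i ^+ 2 - 2 * k * \sum_(i < d) f i * g i + k ^+ 2 * \sum_(i < d) g i ^+ 2.
Proof.
rewrite !mulr_sumr -sumrB -big_split /=; apply: eq_bigr => i _; ring.
Qed.

Lemma sqnorm_step beta gamma (Phi : 'M[R]_(n, d)) s a s' z :
  sqnorm ((1%:M - gamma *: amat beta Phi ((s, a, s') : sample n m)) *m z) =
  sqnorm z - 2 * (gamma * (yv Phi z s - beta * yv Phi z s')) * yv Phi z s +
  (gamma * (yv Phi z s - beta * yv Phi z s')) ^+ 2 * sqnorm (phi Phi s).
Proof.
have -> : sqnorm ((1%:M - gamma *: amat beta Phi ((s, a, s') : sample n m)) *m z) =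
  \sum_(i < d) (z i 0 - (gamma * (yv Phi z s - beta * yv Phi z s')) * Phi s i) ^+ 2.
  by apply: eq_bigr => i _; rewrite step_entry.
rewrite sum_sq_expand; congr (_ - _ * _ + _ * _).
  by rewrite /yv; apply: eq_bigr => i _; rewrite mulrC.
by apply: eq_bigr => i _; rewrite /phi !mxE.
Qed.

Lemma real_step (S ys ys' Ns Phi2 gamma beta : R) :
  0 < gamma -> 0 < beta -> beta < 1 -> 0 <= Ns -> Ns <= Phi2 ->
  S - 2 * (gamma * (ys - beta * ys')) * ys + (gamma * (ys - beta * ys')) ^+ 2 * Ns <=
  S + (- 2 * gamma + gamma * beta + gamma ^+ 2 * Phi2 * (1 + beta)) * ys ^+ 2
    + (gamma * beta + gamma ^+ 2 * Phi2 * beta * (1 + beta)) * ys' ^+ 2.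
Proof.
move=> g0 b0 b1 N0 N1.
have h1 : 2 * ys * ys' <= ys ^+ 2 + ys' ^+ 2.
  have := sqr_ge0 (ys - ys'); lra.
have h2 : (ys - beta * ys') ^+ 2 <= (1 + beta) * (ys ^+ 2 + beta * ys' ^+ 2).
  have := sqr_ge0 (ys + ys'); have := mulr_ge0 (ltW b0) (sqr_ge0 (ys + ys')).
  move=> h _; rewrite -subr_ge0; apply: le_trans h _; rewrite le_eqVlt; apply/orP; left.
  apply/eqP; ring.
have h3 : (ys - beta * ys') ^+ 2 * Ns <= (1 + beta) * (ys ^+ 2 + beta * ys' ^+ 2) * Phi2.
  apply: le_trans (ler_wpM2r (le_trans N0 N1) h2).
  by apply: ler_wpM2l => //; apply: sqr_ge0.
have g2 : 0 <= gamma ^+ 2 by apply: sqr_ge0.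
have h4 := ler_wpM2l g2 h3.
have h5 : gamma * beta * (2 * ys * ys') <= gamma * beta * (ys ^+ 2 + ys' ^+ 2).
  by apply: ler_wpM2l => //; apply: mulr_ge0; apply: ltW.
rewrite exprMn.
set A := (ys - beta * ys') ^+ 2 in h2 h3 h4 *.
have -> : A = ys ^+ 2 - 2 * beta * ys * ys' + beta ^+ 2 * ys' ^+ 2 by rewrite /A; ring.
move: h4; rewrite /A.
have -> : (ys - beta * ys') ^+ 2 = ys ^+ 2 - 2 * beta * ys * ys' + beta ^+ 2 * ys' ^+ 2 by ring.
move=> h4.
have E1 : gamma ^+ 2 * (ys ^+ 2 - 2 * beta * ys * ys' + beta ^+ 2 * ys' ^+ 2) * Ns
  = gamma ^+ 2 * ((ys ^+ 2 - 2 * beta * ys * ys' + beta ^+ 2 * ys' ^+ 2) * Ns) by ring.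
rewrite E1.
have E2 : gamma ^+ 2 * ((1 + beta) * (ys ^+ 2 + beta * ys' ^+ 2) * Phi2) =
   gamma ^+ 2 * Phi2 * (1 + beta) * ys ^+ 2 + gamma ^+ 2 * Phi2 * beta * (1 + beta) * ys' ^+ 2 by ring.
rewrite E2 in h4.
have E3 : S - 2 * (gamma * (ys - beta * ys')) * ys = S - 2 * gamma * ys ^+ 2 + gamma * beta * (2 * ys * ys') by ring.
rewrite E3.
have E4 : gamma * beta * (ys ^+ 2 + ys' ^+ 2) = gamma * beta * ys ^+ 2 + gamma * beta * ys' ^+ 2 by ring.
rewrite E4 in h5.
lra.
Qed.


Hypothesis Hpi0 : forall s a, 0 <= pi s a.
Hypothesis HP0 : forall s a s', 0 <= P s a s'.
Hypothesis Hrho0 : forall s, 0 <= rho 0 s.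

Lemma q_ge0 (x : sample n m) : 0 <= qsample pi P rho x.
Proof. by case: x => [[s a] s'] /=; rewrite !mulr_ge0. Qed.

Definition Yq (Phi : 'M[R]_(n, d)) z := \sum_(s < n) rho 0 s * yv Phi z s ^+ 2.

Lemma Yq_ge0 Phi z : 0 <= Yq Phi z.
Proof. by apply: sumr_ge0 => s _; rewrite mulr_ge0 // sqr_ge0. Qed.

Lemma one_step beta gamma (Phi : 'M[R]_(n, d)) Phi2 z :
  0 < gamma -> 0 < beta -> beta < 1 ->
  (forall s, sqnorm (phi Phi s) <= Phi2) ->
  gamma * Phi2 * (1 + beta) ^+ 2 <= 1 - beta ->
  \sum_(x : sample n m) qsample pi P rho x *
     sqnorm ((1%:M - gamma *: amat beta Phi x) *m z)
  <= sqnorm z - gamma * (1 - beta) * Yq Phi z.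
Proof.
move=> g0 b0 b1 HN Hg.
set c1 := - 2 * gamma + gamma * beta + gamma ^+ 2 * Phi2 * (1 + beta).
set c2 := gamma * beta + gamma ^+ 2 * Phi2 * beta * (1 + beta).
apply: (@le_trans _ _ (\sum_(x : sample n m) qsample pi P rho x *
   (sqnorm z + c1 * yv Phi z x.1.1 ^+ 2 + c2 * yv Phi z x.2 ^+ 2))).
  apply: ler_sum => -[[s a] s'] _; apply: ler_wpM2l; first exact: q_ge0.
  rewrite sqnorm_step; apply: real_step => //.
  by rewrite /sqnorm; apply: sumr_ge0 => i _; apply: sqr_ge0.
under eq_bigr do rewrite !mulrDr.
rewrite !big_split /= -mulr_suml sumq1 mul1r.
under eq_bigr do rewrite mulrCA.
rewrite -mulr_sumr (sumq_s (fun s => yv Phi z s ^+ 2)).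
under eq_bigr do rewrite mulrCA.
rewrite -mulr_sumr (sumq_s' (fun s => yv Phi z s ^+ 2)) -/(Yq Phi z).
have Y0 := Yq_ge0 Phi z.
have : (c1 + c2) * Yq Phi z <= - (gamma * (1 - beta)) * Yq Phi z.
  apply: ler_wpM2r => //; rewrite /c1 /c2.
  have : gamma * (gamma * Phi2 * (1 + beta) ^+ 2) <= gamma * (1 - beta).
    by apply: ler_wpM2l => //; apply: ltW.
  move=> h; have E : - 2 * gamma + gamma * beta + gamma ^+ 2 * Phi2 * (1 + beta) +
   (gamma * beta + gamma ^+ 2 * Phi2 * beta * (1 + beta)) =
   - 2 * gamma + 2 * gamma * beta + gamma * (gamma * Phi2 * (1 + beta) ^+ 2) by ring.
  rewrite E; lra.
move=> h; have E : sqnorm z + c1 * Yq Phi z + c2 * Yq Phi z = sqnorm z + (c1 + c2) * Yq Phi z by ring.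
rewrite E; have E' : sqnorm z - gamma * (1 - beta) * Yq Phi z = sqnorm z + - (gamma * (1 - beta)) * Yq Phi z by ring.
rewrite E'; lra.
Qed.


Lemma Bmat_sym (Phi : 'M[R]_(n, d)) : (Bmat rho Phi)^T = Bmat rho Phi.
Proof.
rewrite /Bmat linear_sum; apply: eq_bigr => s _.
by rewrite linearZ /= trmx_mul trmxK.
Qed.

Lemma rsq_tr (z : 'cV[R]_d) : rsq z^T = sqnorm z.
Proof. by apply: eq_bigr => i _; rewrite mxE. Qed.

Lemma rqf_Bmat (Phi : 'M[R]_(n, d)) z : rqf (Bmat rho Phi) z^T = Yq Phi z.
Proof.
rewrite /rqf trmxK /Bmat mulmx_sumr mulmx_suml summxE; apply: eq_bigr => s _.
rewrite -scalemxAr -scalemxAl mxE; congr (_ * _).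
rewrite !mulmxA -(mulmxA _ (phi Phi s)^T) mxE big_ord1 /yv expr2.
congr (_ * _); rewrite mxE.
  by apply: eq_bigr => j _; rewrite /phi !mxE mulrC.
by apply: eq_bigr => j _; rewrite /phi !mxE.
Qed.


Lemma sqnorm_ge0 (z : 'cV[R]_d) : 0 <= sqnorm z.
Proof. by apply: sumr_ge0 => i _; apply: sqr_ge0. Qed.

Lemma ExpSamples_ge0 t beta gamma (Phi : 'M[R]_(n, d)) z :
  0 <= ExpSamples t beta gamma pi P rho Phi z.
Proof.
apply: sumr_ge0 => xs _; rewrite mulr_ge0 ?sqnorm_ge0 //.
by apply: prodr_ge0 => x _; exact: q_ge0.
Qed.

Lemma pointwise beta gamma (Phi : 'M[R]_(n, d)) Phi2 mu' :
  0 < gamma -> 0 < beta -> beta < 1 ->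
  (forall s, sqnorm (phi Phi s) <= Phi2) ->
  gamma * Phi2 * (1 + beta) ^+ 2 <= 1 - beta ->
  (forall z, mu' * sqnorm z <= Yq Phi z) -> (0 < d)%N ->
  0 <= 1 - gamma * (1 - beta) * mu' /\
  forall t z, ExpSamples t beta gamma pi P rho Phi z <=
     (1 - gamma * (1 - beta) * mu') ^+ t * sqnorm z.
Proof.
move=> g0 b0 b1 HN Hg HY d0.
have gb : 0 < gamma * (1 - beta) by rewrite mulr_gt0 // subr_gt0.
have OS z : \sum_(x : sample n m) qsample pi P rho x *
     sqnorm ((1%:M - gamma *: amat beta Phi x) *m z)
  <= (1 - gamma * (1 - beta) * mu') * sqnorm z.
  apply: le_trans (one_step beta gamma Phi Phi2 z g0 b0 b1 HN Hg) _.
  have := ler_wpM2l (ltW gb) (HY z); lra.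
have c0 : 0 <= 1 - gamma * (1 - beta) * mu'.
  pose z : 'cV[R]_d := delta_mx (Ordinal d0) 0.
  have z1 : sqnorm z = 1.
    rewrite /sqnorm (bigD1 (Ordinal d0)) //= big1 ?mxE ?eqxx /= ?addr0 ?expr1n //.
    by move=> i /negbTE Hi; rewrite mxE Hi expr0n.
  have := OS z; rewrite z1 mulr1; apply: le_trans.
  by apply: sumr_ge0 => x _; rewrite mulr_ge0 ?q_ge0 ?sqnorm_ge0.
split => // t; elim: t => [|t IH] z; first by rewrite ExpSamples0 expr0 mul1r.
rewrite ExpSamplesS.
apply: (@le_trans _ _ (\sum_(x : sample n m) qsample pi P rho x *
   ((1 - gamma * (1 - beta) * mu') ^+ t *
     sqnorm ((1%:M - gamma *: amat beta Phi x) *m z)))).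
  by apply: ler_sum => x _; apply: ler_wpM2l; [exact: q_ge0 | exact: IH].
under eq_bigr do rewrite mulrCA.
rewrite -mulr_sumr exprSr -(mulrA (_ ^+ t)); apply: ler_wpM2l; first exact: exprn_ge0.
exact: OS.
Qed.

End Main.

Section Meas.
Variables (R : realType) (d : nat) (dO : measure_display) (Omega : measurableType dO).

Lemma meas_sqnormM (z : Omega -> 'cV[R]_d) (M : 'M[R]_d) :
  (forall i, measurable_fun setT (fun w => z w i 0)) ->
  measurable_fun setT (fun w => sqnorm (M *m z w)).
Proof.
move=> hz; rewrite /sqnorm.
apply: measurable_sum => i; apply: measurable_funX.
have -> : (fun w => (M *m z w) i 0) = (fun w => \sum_(j < d) M i j * z w j 0).
  by apply: funext => w; rewrite mxE.
apply: measurable_sum => j; apply: measurable_funM => //.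
Qed.

End Meas.


Theorem mainTheorem11
  (R : realType) (n m d : nat)
  (pi : 'M[R]_(n, m)) (P : 'I_n -> 'I_m -> 'I_n -> R)
  (r : 'I_n -> 'I_m -> R) (Rmax beta : R)
  (rho : 'rV[R]_n) (Phi : 'M[R]_(n, d)) (Phimax mu' gamma : R)
  (dO : measure_display) (Omega : measurableType dO)
  (Pr : probability Omega R) (theta0 : Omega -> 'cV[R]_d) :
  (forall s a, 0 <= pi s a) ->
  (forall s, \sum_(a < m) pi s a = 1) ->
  (forall s a s', 0 <= P s a s') ->
  (forall s a, \sum_(s' < n) P s a s' = 1) ->
  (forall s a, `|r s a| <= Rmax) ->
  0 < beta < 1 ->
  irreducible (Ppi pi P) ->
  (forall s, 0 <= rho 0 s) -> \sum_(s < n) rho 0 s = 1 ->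
  rho *m Ppi pi P = rho ->
  (forall s, Num.sqrt (sqnorm (phi Phi s)) <= Phimax) ->
  \rank Phi = d ->
  eigenvalue (Bmat rho Phi) mu' ->
  (forall lam : R, eigenvalue (Bmat rho Phi) lam -> mu' <= lam) ->
  0 < mu' ->
  (forall i, measurable_fun setT (fun w => theta0 w i 0)) ->
  0 < gamma <= (1 - beta) / ((1 + beta) ^+ 2 * Phimax ^+ 2) ->
  forall t : nat, (1 <= t)%N ->
  let z0 := fun w => theta0 w - thetastar beta pi P r rho Phi in
  let EC := (\int[Pr]_w (ExpSamples t beta gamma pi P rho Phi (z0 w))%:E)%E in
  let Ez0 := (\int[Pr]_w (sqnorm (z0 w))%:E)%E in
  (EC <= ((1 - gamma * (1 - beta) * mu') ^+ t)%:E * Ez0)%E /\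
  (((1 - gamma * (1 - beta) * mu') ^+ t)%:E * Ez0
     <= (expR (- (gamma * (1 - beta) * mu' * t%:R)))%:E * Ez0)%E.
Proof.
move=> Hpi0 Hpi1 HP0 HP1 _ /andP[b0 b1] _ Hrho0 Hrho1 Hstat HPhi _ Heig Hmu _ Hth
  /andP[g0 gle] t _ z0 EC Ez0.
have d0 : (0 < d)%N.
  case: (posnP d) => // d0; move/eigenvalueP: Heig => [v _ vn0].
  suff : v == 0 by rewrite (negbTE vn0).
  apply/eqP/matrixP => i j; have := ltn_ord j; by rewrite {2}d0 ltn0.
have HN : forall s, sqnorm (phi Phi s) <= Phimax ^+ 2.
  move=> s; have h0 : 0 <= sqnorm (phi Phi s) by apply: sqnorm_ge0.
  have := HPhi s; rewrite -{2}(sqr_sqrtr h0); have := sqrtr_ge0 (sqnorm (phi Phi s)).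
  move=> h1 h2; nra.
have K0 : 0 < (1 + beta) ^+ 2 * Phimax ^+ 2.
  have h : 0 <= (1 + beta) ^+ 2 * Phimax ^+ 2 by rewrite mulr_ge0 // sqr_ge0.
  rewrite lt_def h andbT; apply/eqP => K; move: gle; rewrite K invr0 mulr0 => h'.
  by move: g0; rewrite ltNge h'.
have Hg : gamma * Phimax ^+ 2 * (1 + beta) ^+ 2 <= 1 - beta.
  by move: gle; rewrite ler_pdivlMr // => h; apply: le_trans h; rewrite le_eqVlt; apply/orP; left; apply/eqP; ring.
have HY : forall z, mu' * sqnorm z <= Yq R rho Phi z.
  move=> z; rewrite -rsq_tr -rqf_Bmat.
  by apply: rqf_ge => //; apply: Bmat_sym.
have [c0 PW] := pointwise Hpi1 HP1 Hrho1 Hstat Hpi0 HP0 Hrho0 beta gamma Phi (Phimax ^+ 2) mu' g0 b0 b1 HN Hg HY d0.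
set c := 1 - gamma * (1 - beta) * mu' in c0 PW *.
have mG : measurable_fun setT (fun w => sqnorm (z0 w)).
  have := @meas_sqnormM R d dO Omega z0 1%:M.
  under eq_fun do rewrite mul1mx; apply => i.
  have -> : (fun w => z0 w i 0) = (fun w => theta0 w i 0 - thetastar beta pi P r rho Phi i 0).
    by apply: funext => w; rewrite /z0 !mxE.
  by apply: measurable_funB => //; apply: measurable_cst.
have mF : measurable_fun setT (fun w => ExpSamples t beta gamma pi P rho Phi (z0 w)).
  rewrite /ExpSamples; apply: measurable_sum => xs; apply: measurable_funM.
    exact: measurable_cst.
  apply: meas_sqnormM => i.
  have -> : (fun w => z0 w i 0) = (fun w => theta0 w i 0 - thetastar beta pi P r rho Phi i 0).
    by apply: funext => w; rewrite /z0 !mxE.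
  by apply: measurable_funB => //; apply: measurable_cst.
have Ez0ge : (0 <= Ez0)%E by apply: integral_ge0 => w _; rewrite lee_fin sqnorm_ge0.
split.
  rewrite /EC /Ez0 -ge0_integralZl_EFin //; try (by apply/measurable_EFinP);
    try (by move=> w _; rewrite lee_fin sqnorm_ge0); try (exact: exprn_ge0).
  apply: ge0_le_integral => //.
  - by move=> w _; rewrite lee_fin; apply: ExpSamples_ge0.
  - by apply/measurable_EFinP.
  - under eq_fun do rewrite -EFinM.
    apply/measurable_EFinP; apply: measurable_funM => //; exact: measurable_cst.
  - by move=> w _; rewrite -EFinM lee_fin PW.
apply: lee_wpmul2r => //; rewrite lee_fin -mulNr expRM_natr.
apply: lerXn2r; rewrite ?nnegrE ?expR_ge0 //.
by have := expR_ge1Dx (- (gamma * (1 - beta) * mu')); rewrite /c.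
Qed.
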